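(* Let $X$ be an Alexandroff space, $Y$ a topological space, $x\in X$, and $f:X\to Y$ a map with closed graph. Then the restriction of $f$ to $[x]_{\Re_X}$ is constant.
   Context: For a map $f:X\to Y$ its graph is $G_f=\{(x,f(x)):x\in X\}$; $f$ has closed graph if $G_f$ is closed in $X\times Y$ (product topology). A topological space $X$ is an Alexandroff space if the intersection of every nonempty family of open subsets of $X$ is open; equivalently, every point $a\in X$ has a smallest open neighbourhood, denoted $V_a$. On an Alexandroff space $X$ define the relation $\Re_X$ by: $(x,y)\in\Re_X$ iff there exist $x=x_1,x_2,\ldots,x_n=y$ in $X$ with $V_{x_i}\cap V_{x_{i+1}}\neq\emptyset$ for all $i\in\{1,\ldots,n-1\}$. This is an equivalence relation, and $[x]_{\Re_X}=\{y\in X:(x,y)\in\Re_X\}$ denotes the equivalence class of $x$. *)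

(* Defs.v *)
From HB Require Import structures.
From mathcomp Require Import all_boot all_order.
From mathcomp Require Import boolp classical_sets topology.
Set Implicit Arguments. Unset Strict Implicit. Unset Printing Implicit Defensive.
Local Open Scope classical_set_scope.

Definition alexandroff (X : topologicalType) : Prop :=
  forall (F : set (set X)), F !=set0 -> (forall U, F U -> open U) ->
    open (\bigcap_(U in F) U).

(* V_a : the smallest open neighbourhood of a, i.e. the intersection of all
   open sets containing a (it is open when X is Alexandroff). *)
Definition minnbhd (X : topologicalType) (a : X) : set X :=
  \bigcap_(U in [set U : set X | open U /\ U a]) U.

Definition ReX (X : topologicalType) (x y : X) : Prop :=
  exists (n : nat) (c : nat -> X), c 0 = x /\ c n = y /\
    forall i, (i < n)%N -> minnbhd (c i) `&` minnbhd (c i.+1) !=set0.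

Definition ReX_class (X : topologicalType) (x : X) : set X := [set y | ReX x y].

Definition graph (X Y : Type) (f : X -> Y) : set (X * Y) :=
  [set p | p.2 = f p.1].

Definition closed_graph (X Y : topologicalType) (f : X -> Y) : Prop :=
  closed (graph f).

(* Main.v *)
Require Import Defs.
From mathcomp Require Import all_boot all_order.
From mathcomp Require Import boolp classical_sets topology.
Local Open Scope classical_set_scope.

Lemma minnbhd_const (X Y : topologicalType) (f : X -> Y) (a w : X) :
  closed_graph f -> minnbhd a w -> f w = f a.
Proof.
move=> cg Hw.
have : graph f (a, f w).
  apply: cg => B /=; rewrite {1}/nbhs /=.
  move=> [[P Q] /= [HP HQ] HB].
  move: HP; rewrite nbhsE /= => -[U [oU Ua] UP].
  exists (w, f w); split; first by [].
  apply: HB; split => /=.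
  - by apply: UP; apply: Hw.
  - exact: nbhs_singleton HQ.
by rewrite /graph /=.
Qed.

Theorem lemma3p3 (X Y : topologicalType) (x : X) (f : X -> Y) :
  alexandroff X -> closed_graph f ->
  forall y z, ReX_class x y -> ReX_class x z -> f y = f z.
Proof.
move=> _ cg.
have key : forall y, ReX_class x y -> f y = f x.
  move=> y [n [c [c0 [cn Hc]]]].
  rewrite -cn -c0.
  elim: n {cn} Hc => [|n IH] Hc //.
  have IH' : f (c n) = f (c 0).
    apply: IH => i Hi; apply: Hc; exact: (ltn_trans Hi (ltnSn n)).
  rewrite -IH'.
  have [w [Hw1 Hw2]] := Hc n (ltnSn n).
  have e2 : f w = f (c n.+1) := minnbhd_const _ _ _ _ _ cg Hw2.
  have e1 : f w = f (c n) := minnbhd_const _ _ _ _ _ cg Hw1.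
  by rewrite -e2 e1.
move=> y z Hy Hz.
have ey := key y Hy.
have ez := key z Hz.
by rewrite ey ez.
Qed.
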